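(* Let $(G,\mu,[R])$ be a random-predicate $k$-player game, let $i,p\in[k]$, and let $\varepsilon\in(0,1)$ with $\mathbf{val}(G)=1-\varepsilon$. Then $\mathbf{val}(\mathcal{T}^i_p(G))=1-\varepsilon'$ for some $\varepsilon'>0$ that depends only on $\varepsilon$ and the size of $G$.
   Context: A random-predicate $k$-player game $(G,\mu,[R])$ has finite question sets $\mathcal{X}_j$, finite answer sets $\mathcal{A}_j$, a distribution $\mu$ on $\mathcal{X}_1\times\cdots\times\mathcal{X}_k$ (all probabilities assumed to be multiples of $1/M$ for some integer $M$), and predicates $V_r$, $r\in[R]$; the verifier samples $q\sim\mu$ and $r\in[R]$ uniformly and independently, player $j$ answers $\alpha^j(q|_j)$ ($q|_j$ the $j$-th coordinate), and the verifier accepts iff $V_r(q,\text{answers})=1$; the value is the maximum acceptance probability over strategies. The size of $G$ is $k\cdot M\cdot\prod_j|\mathcal{X}_j||\mathcal{A}_j|$. The $i$-link distribution $L_i(G)$: sample $v\sim\mu|_i$ (marginal on coordinate $i$), then $q,q'$ independently from $\mu$ conditioned on $q|_i=q'|_i=v$. For $q=(x^1,\dots,x^k)$, $q'=(y^1,\dots,y^k)$ let $\Pi^p((q,q'))=(y^1,\dots,y^{p-1},x^p,y^{p+1},\dots,y^k)$. The game $\mathcal{T}^i_p(G)$ (same question and answer sets): the verifier samples $(q,q')\sim L_i(G)$ and $r\in[R]$ uniformly and independently, sends the coordinates of $\tilde q=\Pi^p((q,q'))$ to the players, and on answers $a$ accepts by default if $q\neq q'$, and if $q=q'$ (so $\tilde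 q=q$) accepts iff $V_r(q,a)=1$. Its value is the maximum acceptance probability over strategies $\alpha^j:\mathcal{X}_j\to\mathcal{A}_j$. *)

(* Defs.v *)
(* Probabilities are rationals (all game probabilities are
   multiples of 1/M, and R >= 1 is an integer, so values are rational). *)
From HB Require Import structures.
From mathcomp Require Import all_boot all_order all_algebra.
Unset Printing Implicit Defensive.
Import Order.TTheory GRing.Theory Num.Theory.
Local Open Scope ring_scope.

Definition tup {k : nat} (n : 'I_k -> nat) : finType :=
  {dffun forall j : 'I_k, 'I_(n j)}.

(* A random-predicate k-player game (G, mu, [R]):
   question set X_j = 'I_(gnX j), answer set A_j = 'I_(gnA j),
   mu q = gmu q / gM, predicates V_r for r : 'I_gR. *)
Record game := Game {
  gk : nat;
  gnX : 'I_gk -> nat;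
  gnA : 'I_gk -> nat;
  gM : nat;
  gmu : tup gnX -> nat;
  gR : nat;
  gV : 'I_gR -> tup gnX -> tup gnA -> bool }.

Definition wf_game (G : game) : Prop :=
  (0 < gM G)%N /\ (\sum_(q : tup (gnX G)) gmu G q)%N = gM G /\ (0 < gR G)%N.

Definition gsize (G : game) : nat :=
  (gk G * gM G * \prod_(j < gk G) (gnX G j * gnA G j))%N.

Definition prob (G : game) (q : tup (gnX G)) : rat := (gmu G q)%:R / (gM G)%:R.

Definition strategy (G : game) : finType :=
  {dffun forall j : 'I_(gk G), {ffun 'I_(gnX G j) -> 'I_(gnA G j)}}.

Definition answers (G : game) (s : strategy G) (q : tup (gnX G)) : tup (gnA G) :=
  @finfun _ (fun j => 'I_(gnA G j)) (fun j => s j (q j)).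

Definition acc (G : game) (s : strategy G) : rat :=
  \sum_(q : tup (gnX G)) \sum_(r < gR G)
     prob G q * (gR G)%:R^-1 * (gV G r q (answers G s q))%:R.

Definition gval (G : game) : rat := \big[Num.max/0]_(s : strategy G) acc G s.

Definition marg (G : game) (i : 'I_(gk G)) (v : 'I_(gnX G i)) : rat :=
  \sum_(q : tup (gnX G) | q i == v) prob G q.

Definition cond (G : game) (i : 'I_(gk G)) (v : 'I_(gnX G i)) (q : tup (gnX G))
  : rat := if q i == v then prob G q / marg G i v else 0.

Definition link (G : game) (i : 'I_(gk G)) (q q' : tup (gnX G)) : rat :=
  \sum_(v : 'I_(gnX G i)) marg G i v * cond G i v q * cond G i v q'.

Definition Pi (G : game) (p : 'I_(gk G)) (q q' : tup (gnX G)) : tup (gnX G) :=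
  @finfun _ (fun j => 'I_(gnX G j)) (fun j => if j == p then q j else q' j).

Definition accT (G : game) (i p : 'I_(gk G)) (s : strategy G) : rat :=
  \sum_(q : tup (gnX G)) \sum_(q' : tup (gnX G)) \sum_(r < gR G)
     link G i q q' * (gR G)%:R^-1 *
     (if q != q' then 1 else (gV G r q (answers G s (Pi G p q q')))%:R).

Definition valT (G : game) (i p : 'I_(gk G)) : rat :=
  \big[Num.max/0]_(s : strategy G) accT G i p s.

(* Main.v *)
Require Import Defs.
From HB Require Import structures.
From mathcomp Require Import all_boot all_order all_algebra.
From mathcomp Require Import zify ring lra.
Import Order.TTheory GRing.Theory Num.Theory.
Local Open Scope ring_scope.

Section S.
Variable G : game.
Hypothesis wf : wf_game G.
Variable i : 'I_(gk G).
Local Notation T := (tup (gnX G)).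

Lemma Mpos : (0 < (gM G)%:R :> rat).
Proof. by case: wf => h _; rewrite ltr0n. Qed.

Lemma prob_ge0 q : 0 <= prob G q.
Proof. by rewrite /prob divr_ge0 ?ler0n. Qed.

Lemma sum_prob : \sum_(q : T) prob G q = 1.
Proof.
rewrite /prob -mulr_suml -natr_sum; case: wf => h [-> _].
by rewrite divff // pnatr_eq0 -lt0n.
Qed.

Lemma marg_ge0 v : 0 <= marg G i v.
Proof. by apply: sumr_ge0 => q _; apply: prob_ge0. Qed.

Lemma marg_le1 v : marg G i v <= 1.
Proof.
rewrite -sum_prob /marg [X in _ <= X](bigID (fun q : T => q i == v)) /=.
by rewrite lerDl sumr_ge0 // => q _; apply: prob_ge0.
Qed.

Lemma prob_le_marg q : prob G q <= marg G i (q i).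
Proof.
rewrite /marg (bigD1 q) //= lerDl sumr_ge0 // => q' _; apply: prob_ge0.
Qed.

Lemma cond_ge0 v q : 0 <= cond G i v q.
Proof. rewrite /cond; case: ifP => // _; by rewrite divr_ge0 ?prob_ge0 ?marg_ge0. Qed.

Lemma link_ge0 q q' : 0 <= link G i q q'.
Proof.
by apply: sumr_ge0 => v _; rewrite !mulr_ge0 ?marg_ge0 ?cond_ge0.
Qed.

Lemma sum_cond v : \sum_(q : T) cond G i v q = marg G i v / marg G i v.
Proof.
rewrite /cond -big_mkcond /= -mulr_suml //.
Qed.

Lemma sum_marg : \sum_(v : 'I_(gnX G i)) marg G i v = 1.
Proof.
rewrite -sum_prob /marg (exchange_big_dep xpredT) //=.
by apply: eq_bigr => q _; rewrite (big_pred1 (q i)) // => v; rewrite eq_sym.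
Qed.

Lemma sum_link : \sum_(q : T) \sum_(q' : T) link G i q q' = 1.
Proof.
rewrite -sum_marg /link.
under eq_bigr do rewrite exchange_big /=.
rewrite exchange_big /=; apply: eq_bigr => v _.
under eq_bigr do rewrite -mulr_sumr.
rewrite -mulr_suml sum_cond -mulr_sumr sum_cond.
have [->|m0] := eqVneq (marg G i v) 0; first by rewrite !mul0r.
by rewrite divff // !mulr1.
Qed.

Lemma link_diag q : prob G q / (gM G)%:R <= link G i q q.
Proof.
rewrite /link (bigD1 (q i)) //=.
apply: le_trans (_ : _ <= marg G i (q i) * cond G i (q i) q * cond G i (q i) q) _.
  rewrite /cond eqxx.
  have hp := prob_le_marg q; have hp0 := prob_ge0 q; have hm := marg_le1 (q i).
  have [m0|m0] := eqVneq (marg G i (q i)) 0.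
    have -> : prob G q = 0 by apply/eqP; rewrite eq_le hp0 andbT -m0 hp.
    by rewrite !(mul0r, mulr0).
  have mp : 0 < marg G i (q i) by rewrite lt0r m0 marg_ge0.
  have -> : marg G i (q i) * (prob G q / marg G i (q i)) * (prob G q / marg G i (q i))
     = prob G q * prob G q / marg G i (q i) by field.
  apply: le_trans (_ : _ <= prob G q * prob G q) _.
    have [p0|p0] := eqVneq (gmu G q) 0%N.
      by rewrite /prob p0 !mul0r.
    apply: ler_wpM2l => //; rewrite /prob -[X in X <= _]mul1r ler_pM2r ?invr_gt0 ?Mpos //.
    by rewrite ler1n lt0n.
  by rewrite ler_pdivlMr // ler_piMr // mulr_ge0.
by rewrite lerDl sumr_ge0 // => v _; rewrite !mulr_ge0 ?marg_ge0 ?cond_ge0.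
Qed.

Definition f (s : strategy G) (q : T) : rat :=
  \sum_(r < gR G) (gR G)%:R^-1 * (gV G r q (answers G s q))%:R.

Lemma Rpos : (0 < (gR G)%:R :> rat).
Proof. by case: wf => _ [_ h]; rewrite ltr0n. Qed.

Lemma sumRinv : \sum_(r < gR G) (gR G)%:R^-1 = 1 :> rat.
Proof. by rewrite sumr_const card_ord -[LHS]mulr_natl mulfV // gt_eqF // Rpos. Qed.

Lemma f_ge0 s q : 0 <= f s q.
Proof. by apply: sumr_ge0 => r _; rewrite mulr_ge0 ?invr_ge0 ?ler0n. Qed.

Lemma f_le1 s q : f s q <= 1.
Proof.
rewrite -sumRinv; apply: ler_sum => r _.
by rewrite ler_piMr ?invr_ge0 ?ler0n // lern1 leq_b1.
Qed.

Lemma acc_eq s : acc G s = \sum_(q : T) prob G q * f s q.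
Proof.
by apply: eq_bigr => q _; rewrite /f mulr_sumr; apply: eq_bigr => r _; rewrite mulrA.
Qed.

Lemma Pi_diag p q : Pi G p q q = q.
Proof. by apply/ffunP => j; rewrite ffunE; case: ifP. Qed.

Lemma accT_eq p s : accT G i p s =
  \sum_(q : T) \sum_(q' : T) link G i q q' - \sum_(q : T) link G i q q * (1 - f s q).
Proof.
rewrite /accT -sumrB; apply: eq_bigr => q _.
rewrite (bigD1 q) //= eqxx /= Pi_diag.
rewrite [X in _ = X - _](bigD1 q) //=.
have -> : \sum_(r < gR G) link G i q q * (gR G)%:R^-1 * (gV G r q (answers G s q))%:R
   = link G i q q * f s q.
  by rewrite /f mulr_sumr; apply: eq_bigr => r _; rewrite mulrA.
have -> : \sum_(q' | q' != q) \sum_(r < gR G) link G i q q' * (gR G)%:R^-1 *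
     (if q != q' then 1 else (gV G r q (answers G s (Pi G p q q')))%:R)
   = \sum_(q' | q' != q) link G i q q'.
  apply: eq_bigr => q' hq'; rewrite eq_sym hq' /=.
  by under eq_bigr do rewrite mulr1; rewrite -mulr_sumr sumRinv mulr1.
ring.
Qed.

Lemma accT_le p s eps : gval G = 1 - eps ->
  accT G i p s <= 1 - eps / (gM G)%:R.
Proof.
move=> hv.
have ha : acc G s <= 1 - eps by rewrite -hv /gval; exact: (le_bigmax _ (fun s => acc G s) s).
rewrite accT_eq sum_link lerD2l lerN2.
have h1 : 1 - acc G s = \sum_(q : T) prob G q * (1 - f s q).
  by rewrite acc_eq -[in LHS]sum_prob -sumrB; apply: eq_bigr => q _; ring.
apply: le_trans (_ : _ <= \sum_(q : T) prob G q / (gM G)%:R * (1 - f s q)) _.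
  have -> : \sum_(q : T) prob G q / (gM G)%:R * (1 - f s q) = (1 - acc G s) / (gM G)%:R.
    by rewrite h1 mulr_suml; apply: eq_bigr => q _; ring.
  rewrite ler_pM2r ?invr_gt0 ?Mpos //; lra.
apply: ler_sum => q _; apply: ler_wpM2r; last exact: link_diag.
by rewrite subr_ge0 f_le1.
Qed.
End S.

Theorem claim3p4 :
  exists delta : rat -> nat -> rat,
    (forall (eps : rat) (n : nat), 0 < eps < 1 -> 0 < delta eps n) /\
    forall (G : game) (i p : 'I_(gk G)) (eps : rat),
      wf_game G -> 0 < eps < 1 -> gval G = 1 - eps ->
      exists eps' : rat, valT G i p = 1 - eps' /\ delta eps (gsize G) <= eps'.
Proof.
exists (fun eps n => eps / (maxn n 1)%:R); split.
  move=> eps n /andP[e0 _]; rewrite divr_gt0 // ltr0n; lia.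
move=> G i p eps wf /andP[e0 e1] hv.
exists (1 - valT G i p); split; first ring.
have Mp := Mpos G wf.
have hM : (0 < gM G)%N by case: wf.
have hb : valT G i p <= 1 - eps / (gM G)%:R.
  rewrite /valT; apply: bigmax_le => [|s _]; last exact: (accT_le G wf).
  rewrite subr_ge0 ler_pdivrMr // mul1r; apply: le_trans (ltW e1) _.
  by rewrite ler1n.
case: (pickP (@predT (strategy G))) => [s _|h]; last first.
  move: hv; rewrite /gval big_pred0 // => h0; lra.
case: (pickP (@predT (tup (gnX G)))) => [q _|h]; last first.
  case: wf => _ [hs _]; move: hM; rewrite -hs big_pred0 //.
have hg : (gM G <= maxn (gsize G) 1)%N.
  have hk : (0 < gk G)%N by apply: leq_ltn_trans (ltn_ord i).
  have hP : (0 < \prod_(j < gk G) (gnX G j * gnA G j))%N.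
    apply: prodn_gt0 => j; rewrite muln_gt0.
    by rewrite (leq_ltn_trans _ (ltn_ord (q j))) // (leq_ltn_trans _ (ltn_ord (s j (q j)))).
  rewrite /gsize; apply: leq_trans (leq_maxl _ 1); move: hP; set P := \prod_(j < gk G) _; move=> hP; rewrite -mulnA; apply: leq_trans (leq_pmull _ hk); rewrite leq_pmulr //.
apply: (@le_trans _ _ (eps / (gM G)%:R)).
  rewrite ler_pM2l // lef_pV2 ?posrE ?ltr0n ?ler_nat //; lia.
lra.
Qed.
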